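(* Let $(X,d)$ be a compact metric space, $k\geq1$, and $T:\mathbb{Z}^k\times X\to X$ a continuous action, and let $c>0$ be such that any two distinct $x,y\in X$ satisfy $\sup_{u\in\mathbb{Z}^k}d(T^ux,T^uy)>2c$. Then there exists $\delta>0$ such that whenever $N\geq1$ and $x,y\in X$ satisfy $c\leq d^T_{[-N,N]^k}(x,y)\leq 2c$, we have $d^T_{\partial[-N,N]^k}(x,y)>\delta$.
   Context: For $\Omega\subset\mathbb{R}^k$, $d^T_\Omega(x,y)=\sup_{u\in\Omega\cap\mathbb{Z}^k}d(T^ux,T^uy)$. $\partial[-N,N]^k=\bigcup_{i=1}^k\{x\in[-N,N]^k: x_i\in\{-N,N\}\}$. *)

(* Defs.v *)
From HB Require Import structures.
From mathcomp Require Import all_boot all_order all_algebra.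
From mathcomp Require Import all_classical all_reals all_analysis.
Set Implicit Arguments. Unset Strict Implicit. Unset Printing Implicit Defensive.
Import Order.TTheory GRing.Theory Num.Theory.
Local Open Scope classical_set_scope.
Local Open Scope ring_scope.

Definition is_Zk_action (k : nat) (X : Type) (T : 'rV[int]_k -> X -> X) : Prop :=
  (forall x, T 0 x = x) /\ (forall u v x, T (u + v) x = T u (T v x)).

Definition dT (R : realType) (X : metricType R) (k : nat)
  (T : 'rV[int]_k -> X -> X) (Omega : set 'rV[int]_k) (x y : X) : R :=
  sup [set mdist (T u x) (T u y) | u in Omega].

Definition box (k N : nat) : set 'rV[int]_k :=
  [set u | forall i : 'I_k, `|u ord0 i| <= (N%:Z)].

Definition boxbd (k N : nat) : set 'rV[int]_k :=
  [set u | box N u /\ exists i : 'I_k, `|u ord0 i| = (N%:Z)].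

(* Main.v *)
Require Import Defs.
From HB Require Import structures.
From mathcomp Require Import all_boot all_order all_algebra.
From mathcomp Require Import all_classical all_reals all_analysis.
From mathcomp Require Import zify ring lra.
Import Order.TTheory GRing.Theory Num.Theory.
Local Open Scope classical_set_scope.
Local Open Scope ring_scope.
Lemma cluster_seq (Y : topologicalType) (s : nat -> Y) :
  compact [set: Y] -> exists p : Y, forall B : set Y, nbhs p B -> forall n0 : nat,
    exists n, (n0 <= n)%N /\ B (s n).
Proof.
move=> cY.
have [p [_ cl]] := cY (s @ \oo) _ filterT.
exists p => B pB n0.
have FA : (s @ \oo) [set z | exists n, (n0 <= n)%N /\ z = s n].
  exists n0 => //.
  move=> n /= h; by exists n.
have := cl _ B FA pB.
case=> z [[n [n0n ->]] Bz]; by exists n.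
Qed.
Lemma nbhs_mball (R : realType) (X : metricType R) (p : X) (e : R) :
  0 < e -> nbhs p [set z | mdist p z < e].
Proof. by move=> e0; rewrite -ballEmdist; apply: nbhsx_ballx. Qed.

Lemma cont_eps (R : realType) (X : metricType R) (g : X -> X) (p : X) (e : R) :
  {for p, continuous g} -> 0 < e ->
  exists2 d, 0 < d & forall z, mdist p z < d -> mdist (g p) (g z) < e.
Proof.
move=> gc e0.
have := gc [set z | mdist (g p) z < e] (@nbhs_mball _ _ (g p) _ e0).
rewrite -metricType_numDomainType.nbhs_nbhs_mdist.
case=> d /= d0 H; exists d => // z pz; exact: (H z pz).
Qed.
Lemma small_inv (R : realType) (d : R) : 0 < d ->
  exists n0 : nat, forall n, (n0 <= n)%N -> n.+1%:R^-1 < d.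
Proof.
move=> d0; exists (Num.truncn d^-1) => n hn.
rewrite invf_plt ?posrE ?invr_gt0 //.
apply: lt_le_trans (truncnS_gt _) _.
by rewrite ler_nat ltnS.
Qed.

Lemma unif_cont (R : realType) (X : metricType R) (g : X -> X) :
  compact [set: X] -> continuous g -> forall e, 0 < e ->
  exists2 d, 0 < d & forall a b, mdist a b < d -> mdist (g a) (g b) < e.
Proof.
move=> cX gc e e0; apply: contrapT => H.
have H' : forall n : nat, exists ab : X * X,
    mdist ab.1 ab.2 < n.+1%:R^-1 /\ e <= mdist (g ab.1) (g ab.2).
  move=> n; apply: contrapT => Hn; apply: H; exists n.+1%:R^-1 => // a b ab.
  rewrite ltNge; apply/negP => ge; apply: Hn; by exists (a, b).
pose s n := sval (cid (H' n)).
have sP n : mdist (s n).1 (s n).2 < n.+1%:R^-1 /\ e <= mdist (g (s n).1) (g (s n).2).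
  exact: svalP (cid (H' n)).
have [p cl] := @cluster_seq _ (fun n => (s n).1) cX.
have [d d0 hd] := @cont_eps _ _ _ _ _ (gc p) (divr_gt0 e0 (ltr0Sn _ 1)).
have [n0 hn0] := @small_inv _ _ (divr_gt0 d0 (ltr0Sn _ 1)).
have [n [n0n /= pn]] := cl _ (@nbhs_mball _ _ p _ (divr_gt0 d0 (ltr0Sn _ 1))) n0.
have [ab ge] := sP n.
have pb : mdist p (s n).2 < d.
  rewrite (le_lt_trans (metric_triangle _ (s n).1 _))//.
  rewrite [d]splitr ltrD //; apply: lt_trans ab _; exact: hn0.
have dd : d / 2 < d by lra.
have := hd _ (lt_trans pn dd); have := hd _ pb.
move=> h1 h2.
have : mdist (g (s n).1) (g (s n).2) < e.
  rewrite (le_lt_trans (metric_triangle _ (g p) _))//.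
  by rewrite [e]splitr metric_sym ltrD.
by rewrite ltNge ge.
Qed.
Lemma fin_unif (R : realType) (F : finType) (P : F -> R -> Prop) :
  (forall f d d', P f d -> 0 < d' -> d' <= d -> P f d') ->
  (forall f, exists2 d, 0 < d & P f d) ->
  exists2 d, 0 < d & forall f, P f d.
Proof.
move=> mono H.
suff: forall s : seq F, exists2 d, 0 < d & forall f, f \in s -> P f d.
  case/(_ (enum F)) => d d0 hd; exists d => // f; apply: hd; by rewrite mem_enum.
elim=> [|f s [d1 d10 IH]]; first by exists 1.
have [d2 d20 h2] := H f.
exists (Num.min d1 d2); first by rewrite lt_min d10 d20.
move=> f'; rewrite inE => /orP[/eqP ->|fs].
  apply: mono h2 _ _; first by rewrite lt_min d10 d20.
  by rewrite ge_min lexx orbT.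
apply: mono (IH _ fs) _ _; first by rewrite lt_min d10 d20.
by rewrite ge_min lexx.
Qed.
Lemma nbhs_mball2 (R : realType) (X : metricType R) (p q : X) (e : R) :
  0 < e -> nbhs (p, q) [set z : X * X | mdist p z.1 < e /\ mdist q z.2 < e].
Proof.
move=> e0; exists ([set z | mdist p z < e], [set z | mdist q z < e]).
  by split; apply: nbhs_mball.
by case=> z1 z2 [/= h1 h2].
Qed.

Lemma compactXX (R : realType) (X : metricType R) :
  compact [set: X] -> compact [set: X * X].
Proof. by move=> cX; rewrite -setXTT; apply: compact_setX. Qed.

Lemma box_max (k : nat) (u : 'rV[int]_k) (M : nat) :
  (\max_(i < k) `|u ord0 i|%N <= M)%N -> box M u.
Proof.
move=> h i.
have := leq_trans (@leq_bigmax _ (fun i => `|u ord0 i|%N) i) h.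
move=> /= h2; lia.
Qed.
Lemma expans (R : realType) (X : metricType R) (k : nat)
  (T : 'rV[int]_k -> X -> X) (c : R) :
  compact [set: X] -> (forall u, continuous (T u)) -> 0 < c ->
  (forall x y : X, x != y -> exists u, 2 * c < mdist (T u x) (T u y)) ->
  exists M : nat, forall a b : X,
    (forall v, box M v -> mdist (T v a) (T v b) <= 2 * c) -> mdist a b <= c / 2.
Proof.
move=> cX Tc c0 hexp; apply: contrapT => H.
have H' : forall M : nat, exists ab : X * X,
    (forall v, box M v -> mdist (T v ab.1) (T v ab.2) <= 2 * c) /\
    c / 2 < mdist ab.1 ab.2.
  move=> M; apply: contrapT => HM; apply: H; exists M => a b hv.
  rewrite leNgt; apply/negP => lt; apply: HM; by exists (a, b).
pose s n := sval (cid (H' n)).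
have sP n : (forall v, box n v -> mdist (T v (s n).1) (T v (s n).2) <= 2 * c) /\
    c / 2 < mdist (s n).1 (s n).2 := svalP (cid (H' n)).
have [[p q] cl] := @cluster_seq _ s (@compactXX _ _ cX).
have c40 : 0 < c / 4 by lra.
have pq : p != q.
  apply/negP => /eqP epq; subst q.
  have [n [_ [/= h1 h2]]] := cl _ (@nbhs_mball2 _ _ p p _ c40) 0%N.
  have [_ ge] := sP n.
  have : mdist (s n).1 (s n).2 < c / 2.
    rewrite (le_lt_trans (metric_triangle _ p _))//.
    rewrite metric_sym; lra.
  by rewrite ltNge (ltW ge).
have [u hu] := hexp _ _ pq.
set D := mdist (T u p) (T u q) in hu.
have eta0 : 0 < (D - 2 * c) / 2 by lra.
have [d1 d10 hd1] := @cont_eps _ _ _ _ _ (Tc u p) eta0.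
have [d2 d20 hd2] := @cont_eps _ _ _ _ _ (Tc u q) eta0.
have dm0 : 0 < Num.min d1 d2 by rewrite lt_min d10 d20.
have [n [hn [/= h1 h2]]] := cl _ (@nbhs_mball2 _ _ p q _ dm0) (\max_(i < k) `|u ord0 i|%N).
have [hv _] := sP n.
have hb : box n u by apply: box_max.
have l0 := hv u hb.
have m1 : Num.min d1 d2 <= d1 by rewrite ge_min lexx.
have m2 : Num.min d1 d2 <= d2 by rewrite ge_min lexx orbT.
have l1 := hd1 _ (lt_le_trans h1 m1).
have l2 := hd2 _ (lt_le_trans h2 m2).
have : D < D.
  rewrite {1}/D (le_lt_trans (metric_triangle _ (T u (s n).1) _))//.
  rewrite (le_lt_trans (lerD (lexx _) (metric_triangle _ (T u (s n).2) _)))//.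
  rewrite [mdist (T u (s n).2) _]metric_sym. lra.
by rewrite ltxx.
Qed.
Definition erow {k : nat} (i : 'I_k) (t : int) : 'rV[int]_k :=
  \row_j (if j == i then t else 0).

Lemma unif_family (R : realType) (X : metricType R) (k : nat)
  (T : 'rV[int]_k -> X -> X) (M : nat) (e : R) :
  compact [set: X] -> (forall u, continuous (T u)) -> 0 < e ->
  exists2 d, 0 < d & forall (i : 'I_k) (t : int), `|t| <= M%:Z ->
    forall a b, mdist a b < d -> mdist (T (erow i t) a) (T (erow i t) b) < e.
Proof.
move=> cX Tc e0.
pose w (f : 'I_k * 'I_M.+1 * bool) :=
  erow f.1.1 (if f.2 then - ((f.1.2 : nat)%:Z) else (f.1.2 : nat)%:Z).
pose P f d := forall a b, mdist a b < d -> mdist (T (w f) a) (T (w f) b) < e.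
have mono : forall f d1 d2, P f d1 -> 0 < d2 -> d2 <= d1 -> P f d2.
  move=> f d1 d2 h d20 d21 a b ab; apply: h; exact: lt_le_trans ab d21.
have ex : forall f, exists2 d, 0 < d & P f d.
  move=> f; exact: (@unif_cont _ _ _ cX (Tc (w f)) _ e0).
have [d d0 hd] := @fin_unif R _ P mono ex.
exists d => // i t ht a b ab.
have tM : (`|t|%N < M.+1)%N by lia.
have := hd (i, Ordinal tM, t < 0) a b ab.
suff -> : w (i, Ordinal tM, t < 0) = erow i t by [].
rewrite /w /=; congr erow; case: ifP => /= ?; lia.
Qed.
Lemma half_lt (R : realType) (d : R) : 0 < d -> d / 2 < d.
Proof. move=> d0; lra. Qed.

Theorem lemma3p1 (R : realType) (X : metricType R) (k : nat)
  (T : 'rV[int]_k -> X -> X) (c : R) :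
  compact [set: X] ->
  (0 < k)%N ->
  is_Zk_action T ->
  (forall u, continuous (T u)) ->
  0 < c ->
  (forall x y : X, x != y -> dT T [set: 'rV[int]_k] x y > 2 * c) ->
  exists delta : R, 0 < delta /\
    forall (N : nat) (x y : X), (1 <= N)%N ->
      c <= dT T (@box k N) x y <= 2 * c ->
      dT T (@boxbd k N) x y > delta.
Proof.
move=> cX _ [T0 TD] Tc c0 hfull.
have hexp : forall x y : X, x != y -> exists u, 2 * c < mdist (T u x) (T u y).
  move=> x y xy; have := hfull x y xy; apply: contraPP => H.
  apply/negP; rewrite -leNgt; apply: ge_sup.
    by exists (mdist (T 0 x) (T 0 y)); exists 0.
  move=> r [u _ <-]; rewrite leNgt; apply/negP => h; apply: H; by exists u.
have [M hM] := @expans _ _ _ T c cX Tc c0 hexp.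
have c20 : 0 < c / 2 by lra.
have [d d0 hd] := @unif_family _ _ _ T M (c / 2) cX Tc c20.
exists (d / 2); split; first by lra.
move=> N x y _ /andP[cle le2].
rewrite ltNge; apply/negP => hbd.
move: cle le2 hbd; rewrite /dT.
set S := [set mdist (T u x) (T u y) | u in box N].
set Sb := [set mdist (T u x) (T u y) | u in boxbd N].
move=> cle le2 hbd.
have box0 : box N (0 : 'rV[int]_k).
  move=> j; by rewrite !mxE; lia.
have S0 : S !=set0 by exists (mdist (T 0 x) (T 0 y)); exists 0.
have hsup : has_sup S.
  apply: contrapT => hs; move: cle; rewrite sup_out //; lra.
have ub := ub_le_sup hsup.2.
have [r [u hu <-] hr] := @sup_gt _ S (c / 2) S0 ltac:(lra).
set a := T u x; set b := T u y.
case: (pselect (forall v, box M v -> box N (v + u))) => [hin|hout].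
  have : mdist a b <= c / 2.
    apply: hM => v hv; rewrite /a /b -!TD.
    apply: le_trans (ub _ _) le2; by exists (v + u) => //; apply: hin.
  by rewrite leNgt hr.
move/existsNP: hout => [v /not_implyP [hv hnot]].
have [i hi] : exists i, ~ (`|(v + u) ord0 i| <= N%:Z) by apply/existsNP.
rewrite mxE in hi; move/negP: hi; rewrite -ltNge => hi.
have hui := hu i; have hvi := hv i.
pose t : int := if 0 < v ord0 i + u ord0 i then N%:Z - u ord0 i else - N%:Z - u ord0 i.
have htM : `|t| <= M%:Z.
  rewrite /t; case: ifP => h0; move: h0 hi hui hvi; move: (v ord0 i) (u ord0 i) => a1 b1; lia.
have hbd' : boxbd N (u + erow i t).
  split.
    move=> j; rewrite !mxE; case: eqP => [->|_].
      rewrite /t; case: ifP => h0; move: h0 hi hui hvi;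
        move: (v ord0 i) (u ord0 i) => a1 b1; lia.
    by rewrite addr0; apply: hu.
  exists i; rewrite !mxE eqxx /t; case: ifP => h0; move: h0 hi hui hvi;
    move: (v ord0 i) (u ord0 i) => a1 b1; lia.
have sb : mdist (T (u + erow i t) x) (T (u + erow i t) y) <= d / 2.
  apply: le_trans hbd; apply: ub_le_sup; last by exists (u + erow i t).
  exists (sup S) => r' [u' [hu' _] <-]; apply: ub; by exists u'.
rewrite addrC !TD -/a -/b in sb.
have htM' : `|- t| <= M%:Z by rewrite normrN.
have hlt : mdist (T (erow i t) a) (T (erow i t) b) < d.
  by apply: le_lt_trans sb _; apply: half_lt.
have := hd i (- t) htM' (T (erow i t) a) (T (erow i t) b) hlt.
rewrite -!TD.
have -> : erow i (- t) + erow i t = 0.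
  apply/matrixP => p q; rewrite !mxE; case: eqP => _; [exact: addNr | exact: addr0].
rewrite add0r => h.
by move: hr; rewrite ltNge (ltW h).
Qed.
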